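(* Let $A\in M_n(\mathbb{R})$ be nilpotent and let $\epsilon>0$. Then for every multiset $\Lambda=\{\lambda_1,\ldots,\lambda_n\}$ of complex numbers that is invariant under complex conjugation and satisfies $\sum_{i=1}^n|\lambda_i|^2<\epsilon^2$, there exists $M\in M_n(\mathbb{R})$ with $\|M-A\|<\epsilon$ and $\operatorname{spec}(M)=\Lambda$.
   Context: $M_n(\mathbb{R})$ is the set of real $n\times n$ matrices, $\|\cdot\|$ the Frobenius norm, and $\operatorname{spec}$ the spectrum as a multiset. *)

(* Defs.v *)
From HB Require Import structures.
From mathcomp Require Import all_boot all_order all_algebra.
From mathcomp Require Import reals.
From mathcomp.real_closed Require Import complex.
Set Implicit Arguments. Unset Strict Implicit. Unset Printing Implicit Defensive.
Import Order.TTheory GRing.Theory Num.Theory ComplexField.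
Local Open Scope ring_scope.

Definition frobenius {R : realType} {n : nat} (A : 'M[R]_n) : R :=
  Num.sqrt (\sum_(i < n) \sum_(j < n) A i j ^+ 2).

Definition nilpotent_mx {R : realType} {n : nat} (A : 'M[R]_n) : Prop :=
  exists k : nat, A ^+ k = 0.

Definition complexify {R : realType} {n : nat} (M : 'M[R]_n) : 'M[R[i]]_n :=
  map_mx (real_complex R) M.

(* spec(M) = lam as multisets: the eigenvalues of M (over C, counted with
   algebraic multiplicity) are exactly the entries of lam, i.e. the
   characteristic polynomial of M (over C) is prod_{x in lam} (X - x). *)
Definition spec_eq {R : realType} {n : nat} (M : 'M[R]_n) (lam : seq R[i]) : Prop :=
  char_poly (complexify M) = \prod_(x <- lam) ('X - x%:P).

Definition conj_invariant {R : realType} (lam : seq R[i]) : Prop :=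
  perm_eq [seq x^* | x <- lam] lam.

(* Main.v *)
Require Import Defs.
From HB Require Import structures.
From mathcomp Require Import all_boot all_order all_algebra.
From mathcomp Require Import reals.
From mathcomp.real_closed Require Import complex.
From mathcomp Require Import ring lra zify.
Import Order.TTheory GRing.Theory Num.Theory ComplexField.
Local Open Scope ring_scope.
Set Implicit Arguments. Unset Strict Implicit. Unset Printing Implicit Defensive.

Section Aux.
Variable R : realType.

Definition fsq {m n} (A : 'M[R]_(m, n)) : R := \sum_i \sum_j A i j ^+ 2.

Lemma fsq_ge0 m n (A : 'M[R]_(m, n)) : 0 <= fsq A.
Proof. by apply: sumr_ge0 => i _; apply: sumr_ge0 => j _; apply: sqr_ge0. Qed.

Lemma fsq0 m n : fsq (0 : 'M[R]_(m, n)) = 0.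
Proof. by rewrite /fsq big1 // => i _; rewrite big1 // => j _; rewrite mxE expr0n. Qed.

Lemma fsq_block m1 m2 n1 n2 (A : 'M[R]_(m1, n1)) (B : 'M[R]_(m1, n2))
  (C : 'M[R]_(m2, n1)) (D : 'M[R]_(m2, n2)) :
  fsq (block_mx A B C D) = fsq A + fsq B + fsq C + fsq D.
Proof.
rewrite /fsq big_split_ord /=.
have E1 : \sum_(i < m1) \sum_(j < n1 + n2) block_mx A B C D (lshift m2 i) j ^+ 2
   = \sum_i (\sum_j A i j ^+ 2 + \sum_j B i j ^+ 2).
  apply: eq_bigr => i _; rewrite big_split_ord /=; apply: f_equal2;
     apply: eq_bigr => j _; by rewrite ?block_mxEul ?block_mxEur.
have E2 : \sum_(i < m2) \sum_(j < n1 + n2) block_mx A B C D (rshift m1 i) j ^+ 2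
   = \sum_i (\sum_j C i j ^+ 2 + \sum_j D i j ^+ 2).
  apply: eq_bigr => i _; rewrite big_split_ord /=; apply: f_equal2;
     apply: eq_bigr => j _; by rewrite ?block_mxEdl ?block_mxEdr.
by rewrite E1 E2 !big_split /= !addrA.
Qed.

Lemma fsq_tr m n (A : 'M[R]_(m, n)) : fsq A = \tr (A *m A^T).
Proof.
rewrite /fsq /mxtrace; apply: eq_bigr => i _; rewrite mxE.
by apply: eq_bigr => j _; rewrite mxE expr2.
Qed.

Lemma fsq_orth n (Q X : 'M[R]_n) : Q^T *m Q = 1%:M ->
  fsq (Q *m X *m Q^T) = fsq X.
Proof.
move=> QQ; rewrite !fsq_tr !trmx_mul trmxK.
rewrite -!mulmxA [Q^T *m (Q *m _)]mulmxA QQ mul1mx.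
by rewrite mxtrace_mulC -!mulmxA QQ mulmx1.
Qed.

Lemma fsq_scalar1 (r : R) : fsq (r%:M : 'M[R]_1) = r ^+ 2.
Proof. by rewrite /fsq !big_ord1 mxE. Qed.

Definition sut n (T : 'M[R]_n) := forall i j : 'I_n, (j <= i)%N -> T i j = 0.

End Aux.


Section CP.
Variable F : comNzRingType.

Lemma char_ublock m n (A : 'M[F]_m) (B : 'M[F]_(m, n)) (D : 'M[F]_n) :
  char_poly (block_mx A B 0 D) = char_poly A * char_poly D.
Proof.
rewrite /char_poly /char_poly_mx (scalar_mx_block m n) map_block_mx map_mx0.
by rewrite opp_block_mx add_block_mx oppr0 addr0 det_ublock.
Qed.

Lemma char_sim n (P Q X : 'M[F]_n) : P *m Q = 1%:M ->
  char_poly (P *m X *m Q) = char_poly X.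
Proof.
move=> PQ; rewrite /char_poly.
set P' := map_mx polyC P; set Q' := map_mx polyC Q.
have PQ' : P' *m Q' = 1%:M by rewrite -map_mxM PQ map_mx1.
have -> : char_poly_mx (P *m X *m Q) = P' *m char_poly_mx X *m Q'.
  rewrite /char_poly_mx !map_mxM mulmxBr mulmxBl -/P' -/Q'.
  by rewrite mul_mx_scalar -scalemxAl PQ' scalemx1.
by rewrite !det_mulmx mulrAC -det_mulmx PQ' det1 mul1r.
Qed.

Lemma det2 (A : 'M[F]_2) : \det A = A 0 0 * A 1 1 - A 0 1 * A 1 0.
Proof.
rewrite (expand_det_row _ 0) !big_ord_recl big_ord0 addr0 /cofactor !det_mx11.
rewrite !mxE /=.
have E0 : (ord0 : 'I_2) = 0 by apply/val_inj.
have E1 : lift (0 : 'I_2) (0 : 'I_1) = 1 by apply/val_inj.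
have E2 : lift (ord0 : 'I_2) (ord0 : 'I_1) = 1 by apply/val_inj.
have E3 : lift (1 : 'I_2) (0 : 'I_1) = 0 by apply/val_inj.
rewrite E2 E3 ?E1 E0 /= expr0 expr1 !mul1r mulN1r mulrN.
done.
Qed.
End CP.


Section House.
Variable R : realType.
Variable n : nat.
Implicit Types c w : 'cV[R]_n.+1.

Definition dot (u v : 'cV[R]_n.+1) : R := (u^T *m v) 0 0.

Lemma dotE u v : u^T *m v = (dot u v)%:M.
Proof. exact: mx11_scalar. Qed.

Lemma dot_sum u v : dot u v = \sum_i u i 0 * v i 0.
Proof. by rewrite /dot mxE; apply: eq_bigr => i _; rewrite mxE. Qed.

Lemma house0 c : c != 0 -> c 0 0 <= 0 ->
  exists Q : 'M[R]_n.+1, Q^T *m Q = 1%:M /\ exists k : R, col 0 Q = k *: c.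
Proof.
move=> cn0 c0.
have cc0 : 0 < dot c c.
  rewrite lt_neqAle dot_sum sumr_ge0 ?andbT; last by move=> i _; rewrite -expr2 sqr_ge0.
  apply/negP => /eqP /esym H; move/eqP: cn0; apply; apply/matrixP => i j.
  rewrite (ord1 j) mxE; apply/eqP; rewrite -sqrf_eq0 expr2; apply/eqP.
  by apply: (psumr_eq0P _ H) => // l _; rewrite -expr2 sqr_ge0.
set s := Num.sqrt (dot c c).
have s0 : 0 < s by rewrite sqrtr_gt0.
have ss : s ^+ 2 = dot c c by rewrite sqr_sqrtr // ltW.
set e : 'cV[R]_n.+1 := delta_mx 0 0.
set w := c - s *: e.
set d := dot w w.
have w0 : w 0 0 = c 0 0 - s by rewrite !mxE eqxx mulr1.
have wi : forall i, i != 0 -> w i 0 = c i 0.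
  by move=> i /negbTE i0; rewrite !mxE i0 /= mulr0 subr0.
have dd : d = (c 0 0 - s) ^+ 2 + (s ^+ 2 - c 0 0 ^+ 2).
  rewrite ss /d !dot_sum (bigD1 (0 : 'I_n.+1)) //= [X in _ = _ + (X - _)](bigD1 (0 : 'I_n.+1)) //=.
  rewrite w0 -!expr2 [_ ^+ 2 + \sum_(i < n.+1 | i != 0) c i 0 * c i 0]addrC addrK; congr (_ + _).
  by apply: eq_bigr => i i0; rewrite wi.
have dpos : 0 < d by rewrite dd; nra.
set k := 2 / d.
set Q := 1%:M - k *: (w *m w^T).
have QT : Q^T = Q.
  by rewrite /Q linearB /= linearZ /= trmx_mul trmxK trmx1.
have WW : (w *m w^T) *m (w *m w^T) = d *: (w *m w^T).
  by rewrite mulmxA -[w *m w^T *m w]mulmxA dotE mul_mx_scalar -scalemxAl.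
exists Q; split.
  rewrite QT /Q mulmxBl mul1mx mulmxBr mulmx1 -scalemxAl -scalemxAr WW !scalerA.
  have -> : k * k * d = k + k by rewrite /k; field; rewrite gt_eqF.
  by rewrite scalerDl opprB addrK subrK.
exists (s^-1).
rewrite colE /Q mulmxBl mul1mx -scalemxAl -mulmxA -colE.
rewrite [col 0 w^T]mx11_scalar mul_mx_scalar.
have -> : col 0 w^T 0 0 = w 0 0 by rewrite !mxE.
rewrite w0 scalerA.
have -> : k * (c 0 0 - s) = - s^-1.
  rewrite /k dd; field; apply/andP; split; first by rewrite gt_eqF.
  by rewrite gt_eqF //; nra.
rewrite /w scalerBr scalerA mulNr mulVf ?gt_eqF // scaleNr scaleN1r opprB opprK.
by rewrite addrA addrN add0r.
Qed.

End House.


Section Schur.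
Variable R : realType.

Lemma house n (c : 'cV[R]_n.+1) : c != 0 ->
  exists Q : 'M[R]_n.+1, Q^T *m Q = 1%:M /\ exists k : R, col 0 Q = k *: c.
Proof.
move=> cn0; have [c0|c0] := lerP (c 0 0) 0; first exact: house0.
have c1 : - c != 0 by rewrite oppr_eq0.
have c2 : (- c) 0 0 <= 0 by rewrite mxE oppr_le0 ltW.
have [Q [QQ [k Hk]]] := house0 c1 c2.
by exists Q; split => //; exists (- k); rewrite Hk scalerN scaleNr.
Qed.

Lemma det_pow n (A : 'M[R]_n) k : \det (A ^+ k) = \det A ^+ k.
Proof.
elim: k => [|k IH]; first by rewrite !expr0 det1.
by rewrite !exprSr -mulmxE det_mulmx IH.
Qed.

Lemma conj_pow n (Q A : 'M[R]_n) k : Q *m Q^T = 1%:M ->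
  (Q^T *m A *m Q) ^+ k = Q^T *m (A ^+ k) *m Q.
Proof.
move=> QQ; elim: k => [|k IH].
  by rewrite !expr0 mulmx1 (mulmx1C QQ).
rewrite !exprSr -!mulmxE IH -!mulmxA; congr (_ *m _).
by rewrite !mulmxA -[A ^+ k *m Q *m Q^T]mulmxA QQ mulmx1.
Qed.

Lemma block_pow m (b : 'rV[R]_m) (D : 'M[R]_m) k :
  exists X Y, (block_mx (0 : 'M_1) b 0 D : 'M_(1 + m)) ^+ k = block_mx X Y 0 (D ^+ k).
Proof.
elim: k => [|k [X [Y IH]]].
  exists 1%:M, 0; rewrite !expr0. exact: (@scalar_mx_block _ 1 m 1).
exists (X *m 0 + Y *m 0), (X *m b + Y *m D).
rewrite exprSr IH -mulmxE mulmx_block exprSr -mulmxE.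
by rewrite !mul0mx !mulmx0 ?add0r ?addr0.
Qed.

Lemma sut_block m (b : 'rV[R]_m) (D : 'M[R]_m) :
  sut D -> sut (block_mx (0 : 'M_1) b 0 D : 'M_(1 + m)).
Proof.
move=> sD i j ji.
rewrite /block_mx mxE; case: splitP => i' Hi; rewrite mxE; case: splitP => j' Hj;
  rewrite ?mxE //.
- by move: ji (ltn_ord i'); rewrite Hj Hi; lia.
- apply: sD; move: ji; rewrite Hi Hj; lia.
Qed.

Lemma col0_block n (B : 'M[R]_(1 + n)) : col 0 B = 0 ->
  B = block_mx 0 (ursubmx B) 0 (drsubmx B).
Proof.
move=> cB.
rewrite -[B in LHS]submxK; congr block_mx; apply/matrixP => i j;
  rewrite (ord1 j) /ulsubmx /dlsubmx !mxE;
  [have := congr1 (fun M : 'cV[R]_(1 + n) => M (lshift n i) 0) cB | have := congr1 (fun M : 'cV[R]_(1 + n) => M (rshift 1 i) 0) cB];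
  rewrite !mxE => <-; congr (B _ _); exact: val_inj.
Qed.

Lemma schur n (A : 'M[R]_n) : nilpotent_mx A ->
  exists Q : 'M[R]_n, Q^T *m Q = 1%:M /\ sut (Q^T *m A *m Q).
Proof.
elim: n A => [|n IH] A [k Ak].
  by exists 1%:M; split; [rewrite trmx1 mulmx1 | move=> [] ].
have dA : \det A = 0.
  have : \det A ^+ k == 0 by rewrite -det_pow Ak det0.
  by rewrite expf_eq0 => /andP [_ /eqP].
have /det0P [v vn0 vA] : \det A^T == 0 by rewrite det_tr dA.
set c := v^T.
have cn0 : c != 0 by apply: contra vn0 => /eqP H; rewrite -[v]trmxK -/c H linear0.
have Ac : A *m c = 0 by rewrite /c -[A]trmxK -trmx_mul vA linear0.
have [Q1 [Q1Q1 [kk Hk]]] := house cn0.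
have Q1Q1' := mulmx1C Q1Q1.
set B := Q1^T *m A *m Q1.
have cB : col 0 B = 0 by rewrite /B colE -mulmxA -colE Hk -scalemxAr -mulmxA Ac !linear0.
set B' := (B : 'M_(1 + n)).
have Bdec : B' = block_mx 0 (ursubmx B') 0 (drsubmx B').
  exact: col0_block.
set D := drsubmx B'.
have nD : nilpotent_mx D.
  exists k; have [X [Y H]] := block_pow (ursubmx B') D k.
  rewrite -[D ^+ k](block_mxKdr X Y 0) -H -Bdec /B' /B conj_pow // Ak.
  by rewrite mulmx0 mul0mx; apply/matrixP => i j; rewrite !mxE.
have [Q2 [Q2Q2 sQ2]] := IH D nD.
set b := ursubmx B'.
have PP : (block_mx (1%:M : 'M_1) 0 0 Q2 : 'M[R]_(1 + n))^T *m
          (block_mx (1%:M : 'M_1) 0 0 Q2 : 'M[R]_(1 + n)) = 1%:M.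
  rewrite tr_block_mx !trmx0 trmx1 mulmx_block !mulmx0 !mul0mx !addr0 !add0r mulmx1 Q2Q2.
  by rewrite -scalar_mx_block.
have PBP : (block_mx (1%:M : 'M_1) 0 0 Q2 : 'M[R]_(1 + n))^T *m
     (block_mx 0 b 0 D : 'M[R]_(1 + n)) *m (block_mx (1%:M : 'M_1) 0 0 Q2 : 'M[R]_(1 + n))
     = block_mx 0 (b *m Q2) 0 (Q2^T *m D *m Q2).
  rewrite tr_block_mx !trmx0 trmx1 !mulmx_block !mulmx0 !mul0mx ?addr0 ?add0r !mul1mx.
  by rewrite ?mul0mx ?addr0 ?add0r.
exists (Q1 *m (block_mx (1%:M : 'M_1) 0 0 Q2 : 'M[R]_(1 + n))); split.
  by rewrite trmx_mul -mulmxA [Q1^T *m _]mulmxA Q1Q1 mul1mx PP.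
rewrite trmx_mul -!mulmxA [Q1^T *m (A *m _)]mulmxA [Q1^T *m A *m _]mulmxA -/B.
have -> : B = B' by [].
rewrite Bdec !mulmxA PBP.
exact: sut_block.
Qed.

End Schur.


Section B2.
Variable R : realType.

Definition nc (x : R[i]) : R := Normc.normc x ^+ 2.

Lemma ncE (a b : R) : nc (a +i* b)%C = a ^+ 2 + b ^+ 2.
Proof. by rewrite /nc /= sqr_sqrtr // addr_ge0 // sqr_ge0. Qed.

Lemma choose_uv (t b : R) : exists u v : R, u * v = - b ^+ 2 /\ (u - t) ^+ 2 + v ^+ 2 <= 2 * b ^+ 2.
Proof.
have [h|h] := lerP (b ^+ 2) (t ^+ 2).
  have [t0|t0] := eqVneq t 0.
    have b0 : b = 0 by apply/eqP; rewrite -sqrf_eq0 eq_le sqr_ge0 andbT; move: h; rewrite t0 expr0n.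
    by exists 0, 0; rewrite b0 t0; split; [rewrite mul0r expr0n oppr0 | rewrite !subr0 !expr0n /= !addr0 mulr0].
  exists t, (- b ^+ 2 / t); split; first by rewrite mulrC divfK.
  have ht : 0 < t ^+ 2 by rewrite lt_neqAle sqr_ge0 andbT eq_sym sqrf_eq0.
  have hv : (- b ^+ 2 / t) * t = - b ^+ 2 by rewrite divfK.
  move: (- b ^+ 2 / t) hv => v hv.
  rewrite subrr expr0n /= add0r.
  have : t ^+ 2 * (v ^+ 2 - b ^+ 2) <= 0 by nra.
  rewrite pmulr_rle0 // subr_le0 => hh; nra.
have [h2|h2] := lerP 0 (t * b).
  exists b, (- b); split; first by rewrite mulrN expr2.
  nra.
exists (- b), b; split; first by rewrite mulNr expr2.
nra.
Qed.

Lemma fsq2 (A : 'M[R]_2) : fsq A = A 0 0 ^+ 2 + A 0 1 ^+ 2 + (A 1 0 ^+ 2 + A 1 1 ^+ 2).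
Proof.
rewrite /fsq !big_ord_recl !big_ord0 !addr0.
have E0 : (ord0 : 'I_2) = 0 by apply/val_inj.
have E2 : lift (ord0 : 'I_2) (ord0 : 'I_1) = 1 by apply/val_inj.
by rewrite E0 E2.
Qed.

Definition mk2 (a u v : R) : 'M[R]_2 :=
  \matrix_(i, j) if i == j then a else if i == 0 then u else v.

Lemma mk2E a u v : [/\ mk2 a u v 0 0 = a, mk2 a u v 1 1 = a, mk2 a u v 0 1 = u & mk2 a u v 1 0 = v].
Proof. by rewrite !mxE. Qed.

Lemma spec_mk2 (a b u v : R) : u * v = - b ^+ 2 ->
  spec_eq (mk2 a u v) [:: (a +i* b)%C; (a +i* -b)%C].
Proof.
move=> uv; rewrite /spec_eq /char_poly det2 !big_cons big_nil mulr1.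
rewrite /char_poly_mx /complexify !mxE /= mulr1n mulr0n !sub0r.
have e1 : (a +i* b)%C = (a%:C)%C + (0 +i* b)%C.
  by apply/eqP; rewrite eq_complex /= addr0 add0r !eqxx.
have e2 : (a +i* -b)%C = (a%:C)%C - (0 +i* b)%C.
  by apply/eqP; rewrite eq_complex /= subr0 sub0r !eqxx.
have e3 : ((u%:C)%C * (v%:C)%C)%C = (0 +i* b)%C * (0 +i* b)%C.
  apply/eqP; rewrite eq_complex /= uv !mul0r !mulr0 !subr0 !addr0 sub0r expr2 !eqxx.
  done.
rewrite e1 e2 !polyCD polyCN.
have e4 : ((u%:C)%C)%:P * ((v%:C)%C)%:P = ((0 +i* b)%C)%:P * ((0 +i* b)%C)%:P :> {poly R[i]}.
  by rewrite -!polyCM e3.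
rewrite mulrNN e4.
ring.
Qed.

End B2.


Section Assign.
Variable R : realType.

Lemma spec_perm n (M : 'M[R]_n) l l' : perm_eq l l' -> spec_eq M l -> spec_eq M l'.
Proof. by move=> pl; rewrite /spec_eq (perm_big _ pl). Qed.

Lemma spec_block p m (X : 'M[R]_p) (Y : 'M[R]_(p, m)) (Z : 'M[R]_m) l1 l2 :
  spec_eq X l1 -> spec_eq Z l2 -> spec_eq (block_mx X Y 0 Z) (l1 ++ l2).
Proof.
rewrite /spec_eq /complexify => h1 h2.
by rewrite map_block_mx map_mx0 char_ublock h1 h2 big_cat.
Qed.

Lemma sut_ul p m (T : 'M[R]_(p + m)) : sut T -> sut (ulsubmx T).
Proof. by move=> sT i j ji; rewrite /ulsubmx !mxE; apply: sT. Qed.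

Lemma sut_dr p m (T : 'M[R]_(p + m)) : sut T -> sut (drsubmx T).
Proof. by move=> sT i j ji; rewrite /drsubmx !mxE; apply: sT => /=; rewrite leq_add2l. Qed.

Lemma sut_dl p m (T : 'M[R]_(p + m)) : sut T -> dlsubmx T = 0.
Proof.
move=> sT; apply/matrixP => i j; rewrite /dlsubmx !mxE; apply: sT => /=.
by move: (ltn_ord j); lia.
Qed.

Lemma step_block p m (T : 'M[R]_(p + m)) (B : 'M[R]_p) l1 (c1 S2 : R) l2 :
  sut T -> fsq (B - ulsubmx T) <= c1 -> spec_eq B l1 ->
  (exists M', fsq (M' - drsubmx T) <= S2 /\ spec_eq M' l2) ->
  exists M : 'M[R]_(p + m), fsq (M - T) <= c1 + S2 /\ spec_eq M (l1 ++ l2).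
Proof.
move=> sT h1 s1 [M' [h2 s2]].
exists (block_mx B (ursubmx T) 0 M'); split; last exact: spec_block.
rewrite -[T in X in fsq X]submxK (sut_dl sT) opp_block_mx add_block_mx fsq_block.
rewrite ?block_mxKur subrr ?oppr0 ?addr0 !fsq0 !addr0.
exact: lerD.
Qed.

Lemma ncC (x : R[i]) : nc (Num.conj x) = nc x.
Proof. by case: x => a b; rewrite /= !ncE sqrrN. Qed.

Lemma conj_inv_cons (x : R[i]) l : Num.conj x = x -> conj_invariant (x :: l) ->
  conj_invariant l.
Proof.
move=> xx; rewrite /conj_invariant /= xx perm_cons; done.
Qed.

Lemma conj_inv_cons2 (x : R[i]) l : conj_invariant (x :: Num.conj x :: l) ->
  conj_invariant l.
Proof.
rewrite /conj_invariant /=.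
have -> : Num.conj (Num.conj x) = x by case: x => a b; apply/eqP; rewrite eq_complex /= opprK !eqxx.
move=> h.
have : perm_eq ([:: x; Num.conj x] ++ [seq Num.conj x | x <- l]) ([:: x; Num.conj x] ++ l).
  apply: (perm_trans _ h); rewrite /= -[X in perm_eq _ X]/([:: Num.conj x; x] ++ _).
  by apply/permPl; exact: (perm_catCA [:: x] [:: Num.conj x] _).
by rewrite perm_cat2l.
Qed.

End Assign.


Section Assign2.
Variable R : realType.

Lemma conj_inv_perm (l1 l2 : seq R[i]) : perm_eq l1 l2 -> conj_invariant l1 -> conj_invariant l2.
Proof.
move=> p12 c1; rewrite /conj_invariant.
apply: perm_trans (perm_trans c1 p12).
by rewrite perm_sym; apply: perm_map.
Qed.

Lemma spec1 (r : R) : spec_eq (r%:M : 'M[R]_1) [:: (r +i* 0)%C].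
Proof.
rewrite /spec_eq /char_poly det_mx11 big_cons big_nil mulr1 /char_poly_mx /complexify.
by rewrite !mxE /= mulr1n.
Qed.

Lemma assign n (T : 'M[R]_n) : sut T -> forall lam : seq R[i], size lam = n ->
  conj_invariant lam ->
  exists M : 'M[R]_n, fsq (M - T) <= \sum_(x <- lam) nc x /\ spec_eq M lam.
Proof.
elim/ltn_ind: n T => n IH T sT lam sl cl.
case: lam sl cl => [|x0 l0] sl cl.
  subst n; exists T; rewrite subrr fsq0 big_nil; split => //.
  by rewrite /spec_eq big_nil /char_poly det_mx00.
set lam := x0 :: l0 in sl cl *.
case: (boolP (has (fun x => Num.conj x == x) lam)).
  move/hasP => [x xl /eqP xr].
  have pl := perm_to_rem xl; set l' := rem x lam in pl.
  have cl' : conj_invariant l' by apply: (conj_inv_cons xr); exact: conj_inv_perm cl.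
  have En : n = 1 + size l' by rewrite -sl (perm_size pl).
  clear sl; subst n.
  rewrite (perm_big _ pl) big_cons.
  suff [M [h1 h2]] : exists M : 'M[R]_(1 + size l'), fsq (M - T) <= nc x + \sum_(y <- l') nc y
     /\ spec_eq M ([:: x] ++ l').
    by exists M; split => //; apply: spec_perm h2; rewrite perm_sym.
  clearbody l'; clear pl xl; move: xr; case: x => a b /eqP; rewrite eq_complex /= eqxx /= => /eqP bb.
  have b0 : b = 0 by apply/eqP; rewrite -[b == 0](mulrn_eq0 _ 2) mulr2n; apply/eqP; lra.
  subst b.
  apply: (@step_block R 1 (size l') T (a%:M) [:: (a +i* 0)%C]) => //.
  - have -> : ulsubmx T = 0.
      apply/matrixP => i j; rewrite (ord1 i) (ord1 j) [RHS]mxE; exact: (sut_ul sT).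
    by rewrite subr0 fsq_scalar1 ncE expr0n /= addr0.
  - exact: spec1.
  - apply: IH; [by [] | exact: sut_dr | by [] | by []].
move/hasPn => nr.
have xl : x0 \in lam by rewrite inE eqxx.
set x := x0 in xl *.
have xcl : Num.conj x \in lam.
  by rewrite -(perm_mem cl); apply: map_f.
have pl1 := perm_to_rem xl.
have xcl' : Num.conj x \in rem x lam.
  by move: xcl; rewrite (perm_mem pl1) inE (negbTE (nr x xl)).
have pl2 := perm_to_rem xcl'.
set l'' := rem (Num.conj x) (rem x lam) in pl2.
have pl : perm_eq lam (x :: Num.conj x :: l'').
  by apply: (perm_trans pl1); rewrite perm_cons.
have cl'' : conj_invariant l'' by apply: (@conj_inv_cons2 R x); exact: conj_inv_perm pl cl.
have En : n = 2 + size l'' by rewrite -sl (perm_size pl).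
clear sl; subst n.
rewrite (perm_big _ pl) !big_cons.
suff [M [h1 h2]] : exists M : 'M[R]_(2 + size l''),
   fsq (M - T) <= nc x + nc (Num.conj x) + \sum_(y <- l'') nc y
   /\ spec_eq M ([:: x; Num.conj x] ++ l'').
  by exists M; split; [rewrite /= addrA | apply: spec_perm h2; rewrite perm_sym].
clearbody l''; clear pl pl1 pl2 xl xcl xcl' nr.
case: x => a b.
set N := ulsubmx T.
have sN : sut N := sut_ul sT.
have [u [v [uv huv]]] := choose_uv (N 0 1) b.
apply: (@step_block R 2 (size l'') T (mk2 a u v) [:: (a +i* b)%C; (a +i* -b)%C]) => //.
- rewrite fsq2 !mxE /=.
  rewrite [T (lshift _ 0) (lshift _ 0)]sT // [T (lshift _ 1) (lshift _ 0)]sT //.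
  rewrite [T (lshift _ 1) (lshift _ 1)]sT //.
  rewrite /N /ulsubmx !mxE in huv.
  change (Num.conj (a +i* b)%C) with (a +i* -b)%C.
  rewrite !ncE !subr0 sqrrN; lra.
- exact: spec_mk2.
- apply: IH; [by [] | exact: sut_dr | by [] | by []].
Qed.

End Assign2.


Theorem corollary5p5 (R : realType) (n : nat) (A : 'M[R]_n) (eps : R) :
  nilpotent_mx A -> 0 < eps ->
  forall lam : seq R[i],
    size lam = n ->
    conj_invariant lam ->
    \sum_(x <- lam) Normc.normc x ^+ 2 < eps ^+ 2 ->
    exists M : 'M[R]_n, frobenius (M - A) < eps /\ spec_eq M lam.
Proof.
move=> nA e0 lam sl cl slt.
have [Q [QQ sQ]] := schur nA.
have QQ' := mulmx1C QQ.
have [M [h1 h2]] := assign sQ sl cl.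
exists (Q *m M *m Q^T); split.
  have -> : Q *m M *m Q^T - A = Q *m (M - Q^T *m A *m Q) *m Q^T.
    rewrite mulmxBr mulmxBl !mulmxA QQ' mul1mx -!mulmxA QQ' mulmx1 //.
  change (Num.sqrt (fsq (Q *m (M - Q^T *m A *m Q) *m Q^T)) < eps).
  rewrite fsq_orth //.
  rewrite -[eps]gtr0_norm // -sqrtr_sqr ltr_sqrt ?exprn_gt0 //.
  exact: le_lt_trans h1 slt.
rewrite /spec_eq /complexify !map_mxM -map_trmx.
rewrite char_sim //.
by rewrite map_trmx -map_mxM QQ' map_mx1.
Qed.
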